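(* Let $L>1$ and let $\mathbf{r}:[0,L]\to\mathbb{R}^2$, $\mathbf{r}(s)=[x(s),y(s)]^T$, be a smooth curve parametrized by arclength $s$ (so $|\dot{\mathbf r}(s)|=1$, where $\dot{()}=d/ds$), with $\mathbf{r}(0)=[0,0]^T$ and $\mathbf{r}(L)=[1,0]^T$. If there is no $s^\star\in[0,L]$ with $\dot{\mathbf{r}}(s^\star)=[1,0]^T$, then $\mathbf{r}$ is self-intersecting. *)

(* Defs.v *)
From Stdlib Require Import Reals.
From Coquelicot Require Import Coquelicot.
Open Scope R_scope.

Definition smooth (f : R -> R) : Prop :=
  forall (n : nat) (t : R), ex_derive_n f n t.

(* Main.v *)
Require Import Defs.
From Stdlib Require Import Reals Lra Lia Classical IndefiniteDescription.
From Coquelicot Require Import Coquelicot.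
Open Scope R_scope.

Lemma smooth_cont f : smooth f -> forall t, continuity_pt f t.
Proof.
  intros Hf t. apply continuity_pt_filterlim.
  apply (ex_derive_continuous f t). exact (Hf 1%nat t).
Qed.

Lemma smooth_ex_derive f : smooth f -> forall t, ex_derive f t.
Proof. intros Hf t. exact (Hf 1%nat t). Qed.

Lemma smooth_Dcont f : smooth f -> forall t, continuity_pt (Derive f) t.
Proof.
  intros Hf t. apply continuity_pt_filterlim.
  apply (ex_derive_continuous (Derive f) t). exact (Hf 2%nat t).
Qed.

Lemma cont_eps f x : continuity_pt f x -> forall eps, 0 < eps ->
  exists d, 0 < d /\ forall y, Rabs (y - x) < d -> Rabs (f y - f x) < eps.
Proof.
  intros H eps He. destruct (H eps He) as [d [Hd Hd2]].
  exists d; split; [exact Hd|]. intros y Hy.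
  destruct (Req_dec x y) as [<-|Hne].
  - rewrite Rminus_diag, Rabs_R0; exact He.
  - apply (Hd2 y). split; [split; [exact I| exact Hne]|]. exact Hy.
Qed.

Section Abs.
Variable P : R -> R -> Prop.
Variables (delta L0 L1 : R).
Hypothesis Hdelta : 0 < delta.
Hypothesis Hlen : forall u v, P u v -> u + delta <= v.
Hypothesis Hbnd : forall u v, P u v -> L0 <= u /\ v <= L1.
Hypothesis Hclosed : forall u v, u < v ->
  (forall eta, 0 < eta -> exists u' v', P u' v' /\ u - eta < u' <= u /\ v <= v' < v + eta) ->
  P u v.
Hypothesis Hdesc : forall u v, P u v ->
  exists u' v', P u' v' /\ u <= u' /\ v' <= v /\ v' - u' < v - u.

Definition nested (q p : R * R) := fst p <= fst q /\ snd q <= snd p.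

Lemma step_exists (n : nat) (p : R * R) : exists q : R * R,
  P (fst p) (snd p) -> (P (fst q) (snd q) /\ nested q p /\
    forall r, P (fst r) (snd r) -> nested r p -> snd q - fst q < snd r - fst r + / INR (S n)).
Proof.
  destruct (classic (P (fst p) (snd p))) as [Hp|Hp]; [|exists p; tauto].
  set (E := fun l => exists r, P (fst r) (snd r) /\ nested r p /\ l = fst r - snd r).
  assert (HE : bound E).
  { exists 0. intros l [r [Hr [_ ->]]]. apply Hlen in Hr. lra. }
  assert (HE2 : exists l, E l).
  { exists (fst p - snd p). exists p. split; [exact Hp|]. split; [split; lra|reflexivity]. }
  destruct (completeness E HE HE2) as [m [Hub Hlub]].
  assert (Hpos : 0 < / INR (S n)). { apply Rinv_0_lt_compat, lt_0_INR; lia. }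
  destruct (classic (exists r, P (fst r) (snd r) /\ nested r p /\ m - / INR (S n) < fst r - snd r))
    as [[r [Hr1 [Hr2 Hr3]]]|Hno].
  - exists r. intros _. split; [exact Hr1|]. split; [exact Hr2|].
    intros r' Hr' Hn'. assert (E (fst r' - snd r')) by (exists r'; auto).
    apply Hub in H. lra.
  - exfalso. assert (Hm : m <= m - / INR (S n)).
    { apply Hlub. intros l [r [Hr1 [Hr2 ->]]].
      apply Rnot_lt_le. intro Hc. apply Hno. exists r. auto. }
    lra.
Qed.

Lemma no_bad : forall u v, ~ P u v.
Proof.
  intros u0 v0 H0.
  set (f := fun n p => proj1_sig (constructive_indefinite_description _ (step_exists n p))).
  assert (Hf : forall n p, P (fst p) (snd p) -> (P (fst (f n p)) (snd (f n p)) /\ nested (f n p) p /\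
    forall r, P (fst r) (snd r) -> nested r p -> snd (f n p) - fst (f n p) < snd r - fst r + / INR (S n))).
  { intros n p. unfold f. destruct (constructive_indefinite_description _ _) as [q Hq]. exact Hq. }
  set (s := fix s n := match n with O => (u0, v0) | S k => f k (s k) end).
  assert (Hs : forall n, P (fst (s n)) (snd (s n))).
  { induction n; [exact H0|]. simpl. apply (Hf n (s n) IHn). }
  assert (Hsn : forall n, nested (s (S n)) (s n)).
  { intro n. simpl. apply (Hf n (s n) (Hs n)). }
  set (U := fun n => fst (s n)). set (V := fun n => snd (s n)).
  assert (HUg : Un_growing U). { intro n. unfold U. apply Hsn. }
  assert (HVd : Un_decreasing V). { intro n. unfold V. apply Hsn. }
  assert (HUub : has_ub U). { exists L1. intros l [n ->]. unfold U.
    destruct (Hbnd _ _ (Hs n)). pose proof (Hlen _ _ (Hs n)). lra. }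
  assert (HVlb : has_lb V). { exists (- L0). intros l [n ->]. unfold opp_seq, V.
    destruct (Hbnd _ _ (Hs n)). pose proof (Hlen _ _ (Hs n)). unfold U, V in *. lra. }
  destruct (growing_cv U HUg HUub) as [us Hus].
  destruct (decreasing_cv V HVd HVlb) as [vs Hvs].
  pose proof (growing_ineq U us HUg Hus) as HUle.
  pose proof (decreasing_ineq V vs HVd Hvs) as HVge.
  assert (Happ : forall eta, 0 < eta -> exists n, us - eta < U n /\ V n < vs + eta).
  { intros eta He. destruct (Hus eta He) as [N1 HN1]. destruct (Hvs eta He) as [N2 HN2].
    exists (max N1 N2). specialize (HN1 (max N1 N2) ltac:(lia)). specialize (HN2 (max N1 N2) ltac:(lia)).
    unfold R_dist in *. apply Rabs_def2 in HN1 as [? ?]. apply Rabs_def2 in HN2 as [? ?]. lra. }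
  assert (Hgap : us + delta <= vs).
  { apply Rnot_lt_le. intro Hc. destruct (Happ ((us + delta - vs)/2) ltac:(lra)) as [n [Hn1 Hn2]].
    pose proof (Hlen _ _ (Hs n)). unfold U, V in *. lra. }
  assert (Hps : P us vs).
  { apply Hclosed; [lra|]. intros eta He. destruct (Happ eta He) as [n [Hn1 Hn2]].
    exists (U n), (V n). split; [apply Hs|]. specialize (HUle n). specialize (HVge n). lra. }
  destruct (Hdesc _ _ Hps) as [u' [v' [Hp' [H1 [H2 H3]]]]].
  destruct (archimed_cor1 (vs - us - (v' - u')) ltac:(lra)) as [N [HN1 HN2]].
  destruct N as [|k]; [lia|].
  destruct (Hf k (s k) (Hs k)) as [_ [_ Hmin]].
  specialize (Hmin (u', v') Hp').
  assert (nested (u', v') (s k)).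
  { split; simpl; [specialize (HUle k)|specialize (HVge k)]; unfold U, V in *; lra. }
  specialize (Hmin H).
  change (V (S k) - U (S k) < snd (u', v') - fst (u', v') + / INR (S k)) in Hmin.
  cbn [fst snd] in Hmin. unfold U, V in *. specialize (HUle (S k)). specialize (HVge (S k)). lra.
Qed.
End Abs.

Lemma le_eps a b : (forall e, 0 < e -> a < b + e) -> a <= b.
Proof. intros H. apply Rnot_lt_le. intro Hc. specialize (H ((a-b)/2) ltac:(lra)). lra. Qed.

Lemma IVT_lev (f : R -> R) (Cf : forall t, continuity_pt f t) a b h :
  a <= b -> (f a - h) * (f b - h) <= 0 -> exists z, a <= z <= b /\ f z = h.
Proof.
  intros Hab Hp.
  assert (C : continuity (fun t => f t - h)).
  { intro t. apply continuity_pt_minus; [apply Cf|]. apply continuity_pt_const. intros ? ?; reflexivity. }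
  destruct (IVT_cor (fun t => f t - h) a b C Hab Hp) as [z [Hz1 Hz2]].
  exists z. split; [exact Hz1|lra].
Qed.

Lemma pair_or_split (y : R -> R) (Cy : forall t, continuity_pt y t) u v a b :
  u < a -> a < b -> b < v -> y u = y v ->
  (exists w, a <= w <= b /\ y w = y u) \/
  (exists t1 t2, u <= t1 <= a /\ b <= t2 <= v /\ y t1 = y t2 /\ (t1 = a \/ t2 = b)).
Proof.
  intros H1 H2 H3 Heq. set (c := y u).
  destruct (Rle_dec ((y a - c) * (y b - c)) 0) as [Hp|Hp].
  - left. apply IVT_lev; auto; lra.
  - right. apply Rnot_le_lt in Hp.
    destruct (Rlt_dec 0 (y a - c)) as [Ha|Ha].
    + assert (Hb : 0 < y b - c) by (destruct (Rlt_dec 0 (y b - c)); [assumption| nra]).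
      destruct (Rle_dec (y a) (y b)) as [Hab|Hab].
      * destruct (IVT_lev y Cy b v (y a)) as [z [Hz1 Hz2]]; [lra| rewrite <- Heq; fold c; nra|].
        exists a, z. repeat split; try lra; auto.
      * destruct (IVT_lev y Cy u a (y b)) as [z [Hz1 Hz2]]; [lra| fold c; nra|].
        exists z, b. repeat split; try lra; auto.
    + assert (Ha' : y a - c < 0) by (destruct (Req_dec (y a - c) 0) as [E|E]; [rewrite E in Hp; lra| lra]).
      assert (Hb : y b - c < 0) by nra.
      destruct (Rle_dec (y b) (y a)) as [Hab|Hab].
      * destruct (IVT_lev y Cy b v (y a)) as [z [Hz1 Hz2]]; [lra| rewrite <- Heq; fold c; nra|].
        exists a, z. repeat split; try lra; auto.
      * destruct (IVT_lev y Cy u a (y b)) as [z [Hz1 Hz2]]; [lra| fold c; nra|].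
        exists z, b. repeat split; try lra; auto.
Qed.

Section Main.
Variables (L : R) (x y : R -> R).
Hypothesis HL : 1 < L.
Hypothesis Hx : smooth x.
Hypothesis Hy : smooth y.
Hypothesis Harc : forall s, 0 <= s <= L -> sqrt (Derive x s ^ 2 + Derive y s ^ 2) = 1.
Hypothesis Hnotan : ~ (exists s, 0 <= s <= L /\ Derive x s = 1 /\ Derive y s = 0).
Hypothesis NoInt : forall s1 s2, 0 <= s1 <= L -> 0 <= s2 <= L -> s1 <> s2 ->
  x s1 = x s2 -> y s1 = y s2 -> False.

Definition Pb u v := 0 <= u /\ u < v /\ v <= L /\ y u = y v /\ x u <= x v.

Lemma Dx_m1 c : 0 <= c <= L -> Derive y c = 0 -> Derive x c = -1.
Proof.
  intros Hc Hd. pose proof (Harc c Hc) as H. rewrite Hd in H.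
  assert (Hs : Derive x c ^ 2 + 0 ^ 2 = 1).
  { rewrite <- (sqrt_sqrt (Derive x c ^ 2 + 0 ^ 2)) by nra. rewrite H. ring. }
  assert (Hx2 : (Derive x c - 1) * (Derive x c + 1) = 0) by nra.
  apply Rmult_integral in Hx2. destruct Hx2 as [E|E]; [|lra].
  exfalso. apply Hnotan. exists c. repeat split; try lra; auto.
Qed.

Lemma mvt f u v : smooth f -> u < v -> exists c, u <= c <= v /\ f v - f u = Derive f c * (v - u).
Proof.
  intros Hf Huv. destruct (MVT_gen f u v (Derive f)) as [c [Hc Hc2]].
  - intros t _. apply Derive_correct, smooth_ex_derive, Hf.
  - intros t _. apply smooth_cont, Hf.
  - rewrite Rmin_left, Rmax_right in Hc by lra. exists c; auto.
Qed.

Lemma hlen : exists delta, 0 < delta /\ forall u v, Pb u v -> u + delta <= v.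
Proof.
  assert (Hu := Heine (Derive x) (fun c => 0 <= c <= L) (compact_P3 0 L)
     (fun c _ => smooth_Dcont x Hx c)).
  destruct (Hu (mkposreal 1 Rlt_0_1)) as [d Hd]. simpl in Hd.
  exists d. split; [apply cond_pos|]. intros u v [H0 [H1 [H2 [H3 H4]]]].
  apply Rnot_lt_le. intro Hc.
  destruct (mvt y u v Hy H1) as [c [Hc1 Hc2]].
  assert (Dy0 : Derive y c = 0).
  { rewrite H3 in Hc2. assert (Derive y c * (v - u) = 0) by lra.
    apply Rmult_integral in H. destruct H; [assumption|lra]. }
  pose proof (Dx_m1 c ltac:(lra) Dy0) as Dxc.
  destruct (mvt x u v Hx H1) as [e [He1 He2]].
  assert (Habs : Rabs (Derive x e - Derive x c) < 1).
  { apply Hd; try lra. apply Rabs_def1; lra. }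
  apply Rabs_def2 in Habs as [Ha1 Ha2].
  assert (Derive x e < 0) by lra.
  assert (Derive x e * (v - u) < 0) by nra. lra.
Qed.

Lemma hclosed : forall u v, u < v ->
  (forall eta, 0 < eta -> exists u' v', Pb u' v' /\ u - eta < u' <= u /\ v <= v' < v + eta) ->
  Pb u v.
Proof.
  intros u v Huv H.
  assert (Happ : forall e, 0 < e -> exists u' v', Pb u' v' /\
     Rabs (x u' - x u) < e /\ Rabs (y u' - y u) < e /\
     Rabs (x v' - x v) < e /\ Rabs (y v' - y v) < e).
  { intros e He.
    destruct (cont_eps x u (smooth_cont x Hx u) e He) as [d1 [Hd1 Hd1']].
    destruct (cont_eps y u (smooth_cont y Hy u) e He) as [d2 [Hd2 Hd2']].
    destruct (cont_eps x v (smooth_cont x Hx v) e He) as [d3 [Hd3 Hd3']].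
    destruct (cont_eps y v (smooth_cont y Hy v) e He) as [d4 [Hd4 Hd4']].
    set (eta := Rmin (Rmin d1 d2) (Rmin d3 d4)).
    assert (Heta : 0 < eta) by (unfold eta; repeat apply Rmin_pos; auto).
    assert (E1 : eta <= d1 /\ eta <= d2 /\ eta <= d3 /\ eta <= d4).
    { unfold eta. pose proof (Rmin_l (Rmin d1 d2) (Rmin d3 d4)). pose proof (Rmin_r (Rmin d1 d2) (Rmin d3 d4)).
      pose proof (Rmin_l d1 d2). pose proof (Rmin_r d1 d2). pose proof (Rmin_l d3 d4). pose proof (Rmin_r d3 d4). lra. }
    destruct (H eta Heta) as [u' [v' [HP [Hu1 Hv1]]]].
    exists u', v'. split; [exact HP|].
    assert (Ru : Rabs (u' - u) < eta) by (apply Rabs_def1; lra).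
    assert (Rv : Rabs (v' - v) < eta) by (apply Rabs_def1; lra).
    repeat split; [apply Hd1'|apply Hd2'|apply Hd3'|apply Hd4']; lra. }
  destruct (H 1 Rlt_0_1) as [u1 [v1 [[A1 [A2 [A3 _]]] [B1 B2]]]].
  unfold Pb. repeat split; try lra.
  - apply Rle_antisym; apply le_eps; intros e He;
    destruct (Happ (e/2) ltac:(lra)) as [u' [v' [[_ [_ [_ [Hy' _]]]] [_ [G1 [_ G2]]]]]];
    apply Rabs_def2 in G1 as [? ?]; apply Rabs_def2 in G2 as [? ?]; lra.
  - apply le_eps; intros e He.
    destruct (Happ (e/2) ltac:(lra)) as [u' [v' [[_ [_ [_ [_ Hx']]]] [G1 [_ [G2 _]]]]]].
    apply Rabs_def2 in G1 as [? ?]; apply Rabs_def2 in G2 as [? ?]; lra.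
Qed.

Lemma hdesc : forall u v, Pb u v ->
  exists u' v', Pb u' v' /\ u <= u' /\ v' <= v /\ v' - u' < v - u.
Proof.
  intros u v HP. apply NNPP. intro Hn.
  assert (Hg : forall t1 t2, u <= t1 -> t1 < t2 -> t2 <= v -> t2 - t1 < v - u ->
             y t1 = y t2 -> x t2 < x t1).
  { intros t1 t2 H1 H2 H3 H4 H5. apply Rnot_le_lt. intro Hc. apply Hn.
    exists t1, t2. destruct HP as [P1 [P2 [P3 _]]]. unfold Pb. repeat split; lra. }
  destruct HP as [P1 [P2 [P3 [P4 P5]]]].
  assert (Hle : x v <= x u).
  { apply le_eps. intros e He.
    destruct (cont_eps x u (smooth_cont x Hx u) (e/2) ltac:(lra)) as [d1 [Hd1 Hd1']].
    destruct (cont_eps x v (smooth_cont x Hx v) (e/2) ltac:(lra)) as [d2 [Hd2 Hd2']].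
    set (eps := Rmin (Rmin d1 d2) ((v - u)/2) / 2).
    assert (E1 : 0 < eps /\ eps < d1 /\ eps < d2 /\ eps < (v-u)/2).
    { unfold eps. pose proof (Rmin_l (Rmin d1 d2) ((v-u)/2)). pose proof (Rmin_r (Rmin d1 d2) ((v-u)/2)).
      pose proof (Rmin_l d1 d2). pose proof (Rmin_r d1 d2).
      assert (0 < Rmin (Rmin d1 d2) ((v - u)/2)) by (repeat apply Rmin_pos; lra). lra. }
    destruct (pair_or_split y (smooth_cont y Hy) u v (u + eps) (v - eps)) as [[w [Hw1 Hw2]]|[t1 [t2 [T1 [T2 [T3 T4]]]]]];
      try lra.
    - pose proof (Hg u w ltac:(lra) ltac:(lra) ltac:(lra) ltac:(lra) ltac:(lra)).
      pose proof (Hg w v ltac:(lra) ltac:(lra) ltac:(lra) ltac:(lra) ltac:(lra)). lra.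
    - assert (x t2 < x t1).
      { apply Hg; try lra; destruct T4; lra. }
      assert (Rabs (x t1 - x u) < e/2) by (apply Hd1'; apply Rabs_def1; lra).
      assert (Rabs (x t2 - x v) < e/2) by (apply Hd2'; apply Rabs_def1; lra).
      repeat match goal with H : Rabs _ < _ |- _ => apply Rabs_def2 in H as [? ?] end. lra. }
  apply (NoInt u v); try lra.
Qed.

End Main.

Theorem lemma1 (L : R) (x y : R -> R)
  (HL : 1 < L)
  (Hx : smooth x) (Hy : smooth y)
  (Harc : forall s, 0 <= s <= L ->
            sqrt (Derive x s ^ 2 + Derive y s ^ 2) = 1)
  (H0 : x 0 = 0 /\ y 0 = 0)
  (HLend : x L = 1 /\ y L = 0)
  (Hnotan : ~ (exists s, 0 <= s <= L /\ Derive x s = 1 /\ Derive y s = 0)) :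
  exists s1 s2, 0 <= s1 <= L /\ 0 <= s2 <= L /\ s1 <> s2 /\
                x s1 = x s2 /\ y s1 = y s2.
Proof.
  apply NNPP. intro Hno.
  assert (NoInt : forall s1 s2, 0 <= s1 <= L -> 0 <= s2 <= L -> s1 <> s2 ->
    x s1 = x s2 -> y s1 = y s2 -> False).
  { intros s1 s2 A B C D E. apply Hno. exists s1, s2. auto. }
  destruct (hlen L x y Hx Hy Harc Hnotan) as [delta [Hd Hlen]].
  refine (no_bad (Pb L x y) delta 0 L Hd Hlen _ _ _ 0 L _).
  - intros u v [A [B [C _]]]. split; lra.
  - exact (hclosed L x y Hx Hy).
  - exact (hdesc L x y Hx Hy NoInt).
  - unfold Pb. repeat split; lra.
Qed.
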